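(* Let $ABCD$ be a convex quadrilateral in which no two opposite sides are parallel. If $I_1=I_2$, then $ABCD$ is tangential or cyclic (possibly both, i.e. bicentric).
   Context: Let $E$ be the intersection point of lines $AB$ and $DC$, and $F$ the intersection point of lines $AD$ and $BC$. Let $M,N$ be the midpoints of the diagonals $AC$ and $BD$; the line $MN$ is the Newton line. $I_1$ is the intersection point of the bisector line of the angle $\angle AED$ (the angle at $E$ between rays $EA$ and $ED$) with the line $MN$, and $I_2$ is the intersection point of the bisector line of the angle $\angle AFB$ (the angle at $F$ between rays $FA$ and $FB$) with the line $MN$. A quadrilateral is tangential if it has a circle tangent to all four sides. *)

(* Defs.v *)
From Stdlib Require Import Reals Lra.
Open Scope R_scope.

Definition point := (R * R)%type.

Definition px (P : point) : R := fst P.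
Definition py (P : point) : R := snd P.

Definition cross (P Q R0 S : point) : R :=
  (px Q - px P) * (py S - py R0) - (py Q - py P) * (px S - px R0).

(* Q lies on the line through P1 and P2 (P1 <> P2 assumed where used) *)
Definition on_line (P1 P2 Q : point) : Prop := cross P1 P2 P1 Q = 0.

Definition dist2 (P Q : point) : R :=
  (px P - px Q) ^ 2 + (py P - py Q) ^ 2.

Definition dist (P Q : point) : R := sqrt (dist2 P Q).

Definition midpoint (P Q : point) : point :=
  ((px P + px Q) / 2, (py P + py Q) / 2).

Definition convex_quad (A B C D : point) : Prop :=
  (0 < cross A B B C /\ 0 < cross B C C D /\ 0 < cross C D D A /\ 0 < cross D A A B)
  \/
  (cross A B B C < 0 /\ cross B C C D < 0 /\ cross C D D A < 0 /\ cross D A A B < 0).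

Definition on_angle_bisector (P1 V P2 Q : point) : Prop :=
  exists t : R,
    px Q = px V + t * ((px P1 - px V) / dist V P1 + (px P2 - px V) / dist V P2) /\
    py Q = py V + t * ((py P1 - py V) / dist V P1 + (py P2 - py V) / dist V P2).

Definition tangent_to_segment (O : point) (r : R) (P Q : point) : Prop :=
  exists T : point, exists s : R,
    0 <= s <= 1 /\
    px T = px P + s * (px Q - px P) /\ py T = py P + s * (py Q - py P) /\
    dist O T = r /\
    (px O - px T) * (px Q - px P) + (py O - py T) * (py Q - py P) = 0.

Definition tangential (A B C D : point) : Prop :=
  exists (O : point) (r : R), 0 < r /\
    tangent_to_segment O r A B /\ tangent_to_segment O r B C /\
    tangent_to_segment O r C D /\ tangent_to_segment O r D A.

Definition cyclic (A B C D : point) : Prop :=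
  exists (O : point) (r : R), 0 < r /\
    dist O A = r /\ dist O B = r /\ dist O C = r /\ dist O D = r.

(* Main.v *)
Require Import Defs.
From Stdlib Require Import Reals Lra Psatz.
Open Scope R_scope.

Lemma newton_id (A B C D P : point) :
  cross A B A P + cross C D C P - cross B C B P - cross D A D P =
  4 * cross (midpoint A C) (midpoint B D) (midpoint A C) P.
Proof. destruct A, B, C, D, P; unfold cross, midpoint, px, py; simpl; field. Qed.

Lemma sum_id (A B C D P : point) :
  cross A B A P + cross B C B P + cross C D C P + cross D A D P =
  cross A B A D + cross C D C B.
Proof. destruct A, B, C, D, P; unfold cross, px, py; simpl; ring. Qed.

Definition dot (P Q R0 S : point) : R :=
  (px Q - px P) * (px S - px R0) + (py Q - py P) * (py S - py R0).

Lemma key_id (A B C D P : point) :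
  cross A B A D <> 0 -> cross B C B A <> 0 -> cross C D C B <> 0 -> cross D A D C <> 0 ->
  dist2 A B <> 0 -> dist2 B C <> 0 -> dist2 C D <> 0 -> dist2 D A <> 0 ->
  cross A B A P + cross C D C P - cross B C B P - cross D A D P =
  dot A B A D / cross A B A D * ((cross A B A P)^2 / dist2 A B - (cross D A D P)^2 / dist2 D A)
 + dot B C B A / cross B C B A * ((cross A B A P)^2 / dist2 A B - (cross B C B P)^2 / dist2 B C)
 + dot C D C B / cross C D C B * ((cross C D C P)^2 / dist2 C D - (cross B C B P)^2 / dist2 B C)
 + dot D A D C / cross D A D C * ((cross C D C P)^2 / dist2 C D - (cross D A D P)^2 / dist2 D A).
Proof. destruct A, B, C, D, P; unfold cross, dot, dist2, px, py; simpl; intros; field; repeat split; try assumption; intro Hz; first [apply H3; rewrite <- Hz; ring | apply H4; rewrite <- Hz; ring | apply H5; rewrite <- Hz; ring | apply H6; rewrite <- Hz; ring]. Qed.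
Definition cyc_det (A B C D : point) : R :=
  let bx := px B - px A in let by' := py B - py A in
  let cx := px C - px A in let cy := py C - py A in
  let dx := px D - px A in let dy := py D - py A in
  let b2 := bx*bx + by'*by' in let c2 := cx*cx+cy*cy in let d2 := dx*dx+dy*dy in
  bx*(cy*d2 - dy*c2) - by'*(cx*d2 - dx*c2) + b2*(cx*dy - cy*dx).

Lemma sc_id (A B C D : point) :
  dot A B A D * cross B C B A * cross C D C B * cross D A D C
 + cross A B A D * dot B C B A * cross C D C B * cross D A D C
 + cross A B A D * cross B C B A * dot C D C B * cross D A D C
 + cross A B A D * cross B C B A * cross C D C B * dot D A D C
 = cyc_det A B C D * cross A B D C * cross A D B C.
Proof. destruct A, B, C, D; unfold cross, dot, cyc_det, px, py; simpl; ring. Qed.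

Lemma cyclic_of_det (A B C D : point) :
  cyc_det A B C D = 0 -> cross A B B C <> 0 -> cyclic A B C D.
Proof.
  destruct A as [xa ya], B as [xb yb], C as [xc yc], D as [xd yd].
  unfold cyc_det, cross, cyclic, dist, dist2, px, py; simpl; intros Hc Hn.
  set (bx := xb - xa) in *. set (by' := yb - ya) in *.
  set (cx := xc - xa) in *. set (cy := yc - ya) in *.
  set (dx := xd - xa) in *. set (dy := yd - ya) in *.
  set (den := 2 * (bx * cy - by' * cx)).
  assert (Hden : den <> 0).
  { unfold den. intro Hz. apply Hn. unfold bx, by', cx, cy in *. nra. }
  assert (Hden2 : bx * cy - by' * cx <> 0) by (intro Hz; apply Hden; unfold den; rewrite Hz; ring).
  set (ox := ((bx*bx+by'*by')*cy - (cx*cx+cy*cy)*by') / den).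
  set (oy := ((cx*cx+cy*cy)*bx - (bx*bx+by'*by')*cx) / den).
  exists (xa + ox, ya + oy), (sqrt ((xa + ox - xa)^2 + (ya + oy - ya)^2)).
  unfold Defs.dist, dist2, px, py; cbn [fst snd].
  assert (HB : (xa + ox - xb)^2 + (ya + oy - yb)^2 = (xa + ox - xa)^2 + (ya + oy - ya)^2).
  { replace (xa + ox - xb) with (ox - bx) by (unfold bx; ring).
    replace (ya + oy - yb) with (oy - by') by (unfold by'; ring).
    unfold ox, oy, den; field; unfold den in Hden; auto. }
  assert (HC : (xa + ox - xc)^2 + (ya + oy - yc)^2 = (xa + ox - xa)^2 + (ya + oy - ya)^2).
  { replace (xa + ox - xc) with (ox - cx) by (unfold cx; ring).
    replace (ya + oy - yc) with (oy - cy) by (unfold cy; ring).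
    unfold ox, oy, den; field; unfold den in Hden; auto. }
  assert (HD : (xa + ox - xd)^2 + (ya + oy - yd)^2 = (xa + ox - xa)^2 + (ya + oy - ya)^2).
  { replace (xa + ox - xd) with (ox - dx) by (unfold dx; ring).
    replace (ya + oy - yd) with (oy - dy) by (unfold dy; ring).
    apply Rminus_diag_uniq.
    transitivity (2 * (bx * (cy * (dx * dx + dy * dy) - dy * (cx * cx + cy * cy)) -
       by' * (cx * (dx * dx + dy * dy) - dx * (cx * cx + cy * cy)) +
       (bx * bx + by' * by') * (cx * dy - cy * dx)) / den).
    - unfold ox, oy, den; field; unfold den in Hden; auto.
    - rewrite Hc; unfold Rdiv; ring. }
  rewrite HB, HC, HD. repeat split; auto.
  apply sqrt_lt_R0.
  assert (Hpos: 0 < bx*bx + by'*by').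
  { destruct (Req_dec bx 0); destruct (Req_dec by' 0).
    - exfalso; apply Hn. unfold bx, by' in *. 
      replace (xb - xa) with 0 by lra. replace (yb - ya) with 0 by lra. ring.
    - assert (0 < by'*by') by (apply Rsqr_pos_lt; auto). nra.
    - assert (0 < bx*bx) by (apply Rsqr_pos_lt; auto). nra.
    - assert (0 < bx*bx) by (apply Rsqr_pos_lt; auto). nra. }
  replace ((xa + ox - xa)^2 + (ya + oy - ya)^2) with (ox^2+oy^2) by ring.
  destruct (Req_dec ox 0) as [Hx|Hx].
  - destruct (Req_dec oy 0) as [Hy|Hy].
    + exfalso. 
      replace (xa + ox - xb) with (ox - bx) in HB by (unfold bx; ring).
      replace (ya + oy - yb) with (oy - by') in HB by (unfold by'; ring).
      rewrite Hx, Hy in HB. nra.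
    + assert (0 < oy*oy) by (apply Rsqr_pos_lt; auto). nra.
  - assert (0 < ox*ox) by (apply Rsqr_pos_lt; auto). nra.
Qed.
Lemma dist_sq (P Q : point) : Defs.dist P Q * Defs.dist P Q = dist2 P Q.
Proof.
  unfold Defs.dist. apply sqrt_sqrt. unfold dist2. apply Rplus_le_le_0_compat; apply pow2_ge_0.
Qed.

Lemma dist_nonneg (P Q : point) : 0 <= Defs.dist P Q.
Proof. unfold Defs.dist. apply sqrt_pos. Qed.

Lemma cs_ineq (P Q R0 : point) :
  0 <= Defs.dist P Q * Defs.dist R0 P + dot P Q P R0.
Proof.
  assert (H1 := dist_sq P Q). assert (H2 := dist_sq R0 P).
  assert (H3 := dist_nonneg P Q). assert (H4 := dist_nonneg R0 P).
  assert (Hcs : (dot P Q P R0)^2 <= dist2 P Q * dist2 R0 P).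
  { assert (Id : dist2 P Q * dist2 R0 P - (dot P Q P R0)^2 = (cross P Q P R0)^2).
    { destruct P, Q, R0; unfold dot, cross, dist2, px, py; simpl; ring. }
    pose proof (pow2_ge_0 (cross P Q P R0)). lra. }
  set (x := Defs.dist P Q * Defs.dist R0 P) in *.
  assert (0 <= x) by (unfold x; nra).
  assert (x * x = dist2 P Q * dist2 R0 P) by (unfold x; rewrite <- H1, <- H2; ring).
  nra.
Qed.

Lemma pos_of_mul x y z : 0 < y -> x*y = z -> 0 <= z -> 0 <= x.
Proof. intros. nra. Qed.

Lemma tang (P Q R0 S O : point) (u : R) :
  0 < Defs.dist P Q -> cross P Q P O = Defs.dist P Q * u ->
  cross R0 P R0 O = Defs.dist R0 P * u -> cross Q S Q O = Defs.dist Q S * u ->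
  0 < u * cross P Q P R0 -> 0 < u * cross Q S Q P ->
  tangent_to_segment O (Rabs u) P Q.
Proof.
  intros Ha H1 H2 H3 Hp Hq.
  assert (Hd := dist_sq P Q).
  set (a := Defs.dist P Q) in *.
  assert (Hd2 : dist2 P Q <> 0) by nra.
  assert (I1 : dot P Q P O * cross P Q P R0 = dist2 P Q * cross R0 P R0 O + cross P Q P O * dot P Q P R0).
  { destruct P, Q, R0, O; unfold dot, cross, dist2, px, py; simpl; ring. }
  assert (I2 : dot O Q P Q * cross Q S Q P = dist2 P Q * cross Q S Q O + cross P Q P O * dot Q S Q P).
  { destruct P, Q, S, O; unfold dot, cross, dist2, px, py; simpl; ring. }
  assert (C1 := cs_ineq P Q R0). assert (C2 := cs_ineq Q S P).
  assert (Dsym : Defs.dist Q P = a).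
  { unfold a, Defs.dist, dist2. f_equal. ring. }
  fold a in C1; fold a in C2.
  set (s := dot P Q P O / dist2 P Q).
  exists (px P + s * (px Q - px P), py P + s * (py Q - py P)), s.
  cbn [px py fst snd]. unfold px, py.
  assert (Hs0 : 0 <= dot P Q P O).
  { rewrite H2, H1, <- Hd in I1.
    assert (E : dot P Q P O * (u * cross P Q P R0) = a * (u * u) * (a * Defs.dist R0 P + dot P Q P R0)).
    { transitivity (u * (dot P Q P O * cross P Q P R0)); [ring | rewrite I1; ring]. }
    apply (pos_of_mul _ _ _ Hp E).
    apply Rmult_le_pos; [|exact C1]. apply Rmult_le_pos; [lra|]. apply Rle_0_sqr. }
  assert (Hs1 : 0 <= dot O Q P Q).
  { rewrite H3, H1, <- Hd in I2.
    assert (E : dot O Q P Q * (u * cross Q S Q P) = a * (u * u) * (Defs.dist Q S * a + dot Q S Q P)).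
    { transitivity (u * (dot O Q P Q * cross Q S Q P)); [ring | rewrite I2; ring]. }
    apply (pos_of_mul _ _ _ Hq E).
    apply Rmult_le_pos; [|exact C2]. apply Rmult_le_pos; [lra|]. apply Rle_0_sqr. }
  assert (Hsum : dot P Q P O + dot O Q P Q = dist2 P Q).
  { destruct P, Q, O; unfold dot, dist2, px, py; simpl; ring. }
  assert (Hpos : 0 < dist2 P Q) by nra.
  split; [split|].
  { unfold s, Rdiv. apply Rmult_le_pos; [lra| left; apply Rinv_0_lt_compat; lra]. }
  { unfold s. apply (Rmult_le_reg_r (dist2 P Q)); [lra|].
    field_simplify; [|lra]. lra. }
  split; [reflexivity|]. split; [reflexivity|]. split.
  - unfold Defs.dist. 
    assert (E : dist2 O (fst P + s * (fst Q - fst P), snd P + s * (snd Q - snd P)) = u * u).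
    { apply (Rmult_eq_reg_r (dist2 P Q)); [|lra].
      transitivity ((cross P Q P O)^2).
      - unfold s. destruct P, Q, O; unfold dot, cross, dist2, px, py in *; simpl in *.
        field. intro; apply Hd2. rewrite <- H. ring.
      - rewrite H1, <- Hd. ring. }
    rewrite E. apply sqrt_Rsqr_abs.
  - unfold s. destruct P, Q, O; unfold dot, cross, dist2, px, py in *; simpl in *.
    field. intro; apply Hd2. rewrite <- H. ring.
Qed.
Lemma sqrt_sq_abs x : sqrt (x^2) = Rabs x.
Proof. rewrite <- sqrt_Rsqr_abs. unfold Rsqr. f_equal. ring. Qed.

Lemma sum_sq_pos x y : (x <> 0 \/ y <> 0) -> 0 < x^2 + y^2.
Proof.
  replace (x^2) with (x*x) by ring. replace (y^2) with (y*y) by ring.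
  intros [H|H].
  - assert (0 < x*x) by (apply Rsqr_pos_lt; auto). pose proof (Rle_0_sqr y). unfold Rsqr in *. lra.
  - assert (0 < y*y) by (apply Rsqr_pos_lt; auto). pose proof (Rle_0_sqr x). unfold Rsqr in *. lra.
Qed.

Lemma same_sign x y : 0 < x * y -> (0 < x /\ 0 < y) \/ (x < 0 /\ y < 0).
Proof. intros. destruct (Rlt_or_le 0 x); destruct (Rlt_or_le 0 y); try nra. Qed.

Lemma bis (A B C D E I : point) :
  0 < cross A B A D * cross C D D A -> cross A B D C <> 0 ->
  on_line A B E -> on_line D C E -> on_angle_bisector A E D I ->
  Defs.dist C D * cross A B A I = Defs.dist A B * cross C D C I.
Proof.
  destruct A as [xa ya], B as [xb yb], C as [xc yc], D as [xd yd], E as [xe ye], I as [xi yi].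
  unfold on_line, on_angle_bisector, Defs.dist, dist2, cross, px, py; cbn [fst snd].
  intros Hpos HD H1 H2 [t [Hx Hy]].
  set (Dl := (xb - xa) * (yc - yd) - (yb - ya) * (xc - xd)) in *.
  set (X := (xb - xa) * (yd - ya) - (yb - ya) * (xd - xa)) in *.
  set (Y := (xd - xc) * (ya - yd) - (yd - yc) * (xa - xd)) in *.
  assert (HX : X <> 0) by (intro Hz; rewrite Hz in Hpos; lra).
  assert (HY : Y <> 0) by (intro Hz; rewrite Hz in Hpos; lra).
  assert (hxe : xe = xa - Y / Dl * (xb - xa)).
  { apply (Rmult_eq_reg_r Dl); [|exact HD].
    transitivity (xa * Dl - Y * (xb - xa)); [|field; exact HD].
    assert (Z : xe * Dl - (xa * Dl - Y * (xb - xa)) =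
      (xc - xd) * ((xb - xa) * (ye - ya) - (yb - ya) * (xe - xa))
      - (xb - xa) * ((xc - xd) * (ye - yd) - (yc - yd) * (xe - xd))).
    { unfold Dl, Y. ring. }
    rewrite H1, H2 in Z. lra. }
  assert (hye : ye = ya - Y / Dl * (yb - ya)).
  { apply (Rmult_eq_reg_r Dl); [|exact HD].
    transitivity (ya * Dl - Y * (yb - ya)); [|field; exact HD].
    assert (Z : ye * Dl - (ya * Dl - Y * (yb - ya)) =
      (yc - yd) * ((xb - xa) * (ye - ya) - (yb - ya) * (xe - xa))
      - (yb - ya) * ((xc - xd) * (ye - yd) - (yc - yd) * (xe - xd))).
    { unfold Dl, Y. ring. }
    rewrite H1, H2 in Z. lra. }
  assert (Ha2 : 0 < (xa - xb) ^ 2 + (ya - yb) ^ 2).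
  { apply sum_sq_pos. destruct (Req_dec xa xb); [|left; lra]. destruct (Req_dec ya yb); [|right; lra].
    exfalso; apply HX; unfold X; subst; ring. }
  assert (Hc2 : 0 < (xc - xd) ^ 2 + (yc - yd) ^ 2).
  { apply sum_sq_pos. destruct (Req_dec xc xd); [|left; lra]. destruct (Req_dec yc yd); [|right; lra].
    exfalso; apply HY; unfold Y; subst; ring. }
  assert (Ea := pow2_sqrt _ (Rlt_le _ _ Ha2)).
  assert (Ec := pow2_sqrt _ (Rlt_le _ _ Hc2)).
  assert (Hapos := sqrt_lt_R0 _ Ha2). assert (Hcpos := sqrt_lt_R0 _ Hc2).
  set (a := sqrt ((xa - xb) ^ 2 + (ya - yb) ^ 2)) in *.
  set (c := sqrt ((xc - xd) ^ 2 + (yc - yd) ^ 2)) in *.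
  assert (HsA : sqrt ((xe - xa) ^ 2 + (ye - ya) ^ 2) = Rabs (Y / Dl * a)).
  { rewrite <- sqrt_sq_abs. f_equal. replace ((Y / Dl * a)^2) with ((Y/Dl)^2 * a^2) by ring.
    rewrite Ea, hxe, hye. field. exact HD. }
  assert (HsD : sqrt ((xe - xd) ^ 2 + (ye - yd) ^ 2) = Rabs (X / Dl * c)).
  { rewrite <- sqrt_sq_abs. f_equal. replace ((X / Dl * c)^2) with ((X/Dl)^2 * c^2) by ring.
    rewrite Ec, hxe, hye. unfold X, Y, Dl in *. field. exact HD. }
  rewrite HsA, HsD in Hx, Hy.
  unfold Rdiv in Hx, Hy. rewrite !Rabs_mult, !Rabs_inv, (Rabs_pos_eq a), (Rabs_pos_eq c) in Hx, Hy; try lra.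
  subst xi yi xe ye.
  destruct (same_sign _ _ Hpos) as [[P1 P2]|[P1 P2]].
  - rewrite (Rabs_pos_eq X), (Rabs_pos_eq Y) by lra.
    assert (0 < Rabs Dl) by (apply Rabs_pos_lt; exact HD).
    unfold X, Y, Dl, a, c in *. field. repeat split; lra.
  - rewrite (Rabs_left X), (Rabs_left Y) by lra.
    assert (0 < Rabs Dl) by (apply Rabs_pos_lt; exact HD).
    unfold X, Y, Dl, a, c in *. field. repeat split; lra.
Qed.

Lemma cross_rev (P Q X : point) : cross P Q P X = - cross Q P Q X.
Proof. destruct P, Q, X; unfold cross, px, py; simpl; ring. Qed.

Lemma dist_sym (P Q : point) : Defs.dist P Q = Defs.dist Q P.
Proof. unfold Defs.dist, dist2. f_equal. ring. Qed.

Lemma dist_pos_of_cross (P Q X : point) : cross P Q P X <> 0 -> 0 < Defs.dist P Q.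
Proof.
  destruct P as [x1 y1], Q as [x2 y2], X as [x3 y3].
  unfold cross, Defs.dist, dist2, px, py; cbn [fst snd]. intro H.
  apply sqrt_lt_R0. apply sum_sq_pos.
  destruct (Req_dec x1 x2); [|left; lra]. destruct (Req_dec y1 y2); [|right; lra].
  exfalso; apply H; subst; ring.
Qed.

Lemma or_conv (A B C D : point) : convex_quad A B C D ->
  (0 < cross A B A D /\ 0 < cross B C B A /\ 0 < cross C D C B /\ 0 < cross D A D C) \/
  (cross A B A D < 0 /\ cross B C B A < 0 /\ cross C D C B < 0 /\ cross D A D C < 0).
Proof.
  unfold convex_quad.
  replace (cross A B A D) with (cross D A A B) by (destruct A, B, D; unfold cross, px, py; simpl; ring).
  replace (cross B C B A) with (cross A B B C) by (destruct A, B, C; unfold cross, px, py; simpl; ring).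
  replace (cross C D C B) with (cross B C C D) by (destruct B, C, D; unfold cross, px, py; simpl; ring).
  replace (cross D A D C) with (cross C D D A) by (destruct A, C, D; unfold cross, px, py; simpl; ring).
  intros [H|H]; [left|right]; tauto.
Qed.

Theorem theorem8 (A B C D E F I : point) :
  convex_quad A B C D ->
  cross A B D C <> 0 -> cross A D B C <> 0 ->
  on_line A B E -> on_line D C E ->
  on_line A D F -> on_line B C F ->
  let M := midpoint A C in
  let N := midpoint B D in
  on_angle_bisector A E D I -> on_line M N I ->
  (forall P, on_angle_bisector A E D P -> on_line M N P -> P = I) ->
  on_angle_bisector A F B I ->
  (forall P, on_angle_bisector A F B P -> on_line M N P -> P = I) ->
  tangential A B C D \/ cyclic A B C D.
Proof.
  intros Hconv Hne1 Hne2 HE1 HE2 HF1 HF2 M N HbE HMN _ HbF _.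
  assert (Ho := or_conv _ _ _ _ Hconv).
  assert (HXA : cross A B A D <> 0) by (destruct Ho as [[? [? [? ?]]]|[? [? [? ?]]]]; lra).
  assert (HXB : cross B C B A <> 0) by (destruct Ho as [[? [? [? ?]]]|[? [? [? ?]]]]; lra).
  assert (HXC : cross C D C B <> 0) by (destruct Ho as [[? [? [? ?]]]|[? [? [? ?]]]]; lra).
  assert (HXD : cross D A D C <> 0) by (destruct Ho as [[? [? [? ?]]]|[? [? [? ?]]]]; lra).
  assert (Ha := dist_pos_of_cross _ _ _ HXA).
  assert (Hb := dist_pos_of_cross _ _ _ HXB).
  assert (Hc := dist_pos_of_cross _ _ _ HXC).
  assert (Hd := dist_pos_of_cross _ _ _ HXD).
  assert (hE : Defs.dist C D * cross A B A I = Defs.dist A B * cross C D C I).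
  { apply (bis A B C D E I); auto.
    replace (cross C D D A) with (cross D A D C) by (destruct A, C, D; unfold cross, px, py; simpl; ring).
    destruct Ho as [[? [? [? ?]]]|[? [? [? ?]]]]; nra. }
  assert (hF : Defs.dist B C * cross D A D I = Defs.dist D A * cross B C B I).
  { assert (H := bis A D C B F I).
    rewrite (cross_rev A D I), (cross_rev C B I), (dist_sym C B), (dist_sym A D) in H.
    assert (H' : Defs.dist B C * - cross D A D I = Defs.dist D A * - cross B C B I).
    { apply H; auto.
      replace (cross A D A B) with (- cross A B A D) by (destruct A, B, D; unfold cross, px, py; simpl; ring).
      replace (cross C B B A) with (- cross B C B A) by (destruct A, B, C; unfold cross, px, py; simpl; ring).
      destruct Ho as [[? [? [? ?]]]|[? [? [? ?]]]]; nra. }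
    lra. }
  assert (HN : cross A B A I + cross C D C I - cross B C B I - cross D A D I = 0).
  { rewrite newton_id. unfold on_line in HMN. unfold M, N in HMN. rewrite HMN. ring. }
  assert (HS := sum_id A B C D I).
  destruct (ex_intro (fun u => cross A B A I = Defs.dist A B * u /\ cross C D C I = Defs.dist C D * u)
     (cross A B A I / Defs.dist A B)) as [u [hL1 hL3]].
  { split; [field; lra|]. apply (Rmult_eq_reg_l (Defs.dist A B)); [|lra].
    rewrite <- hE. field. lra. }
  destruct (ex_intro (fun v => cross B C B I = Defs.dist B C * v /\ cross D A D I = Defs.dist D A * v)
     (cross B C B I / Defs.dist B C)) as [v [hL2 hL4]].
  { split; [field; lra|]. apply (Rmult_eq_reg_l (Defs.dist B C)); [|lra].
    rewrite hF. field. lra. }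
  assert (Da := dist_sq A B). assert (Db := dist_sq B C).
  assert (Dc := dist_sq C D). assert (Dd := dist_sq D A).
  assert (Hkey : (u*u - v*v) * (dot A B A D / cross A B A D + dot B C B A / cross B C B A
     + dot C D C B / cross C D C B + dot D A D C / cross D A D C) = 0).
  { rewrite <- HN. rewrite key_id; try assumption; try (rewrite <- Da || rewrite <- Db || rewrite <- Dc || rewrite <- Dd; nra).
    rewrite hL1, hL2, hL3, hL4, <- Da, <- Db, <- Dc, <- Dd. field.
    repeat split; try assumption; lra. }
  apply Rmult_integral in Hkey. destruct Hkey as [Huv|HSC].
  - left.
    assert (Huv' : (u - v) * (u + v) = 0) by (rewrite <- Huv; ring).
    apply Rmult_integral in Huv'. destruct Huv' as [Heq|Hneq].
    + assert (v = u) by lra. subst v.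
      assert (Hu : (Defs.dist A B + Defs.dist B C + Defs.dist C D + Defs.dist D A) * u
                   = cross A B A D + cross C D C B) by (rewrite <- HS, hL1, hL2, hL3, hL4; ring).
      assert (Hsg : 0 < u * cross A B A D /\ 0 < u * cross B C B A /\ 0 < u * cross C D C B /\ 0 < u * cross D A D C).
      { destruct Ho as [[? [? [? ?]]]|[? [? [? ?]]]].
        - assert (0 < u) by nra. repeat split; nra.
        - assert (u < 0) by nra. repeat split; nra. }
      destruct Hsg as [S1 [S2 [S3 S4]]].
      exists I, (Rabs u). split.
      { apply Rabs_pos_lt. intro Hz. rewrite Hz in S1. lra. }
      split; [|split; [|split]].
      * apply tang with D C; auto.
      * apply tang with A D; auto.
      * apply tang with B A; auto.
      * apply tang with C B; auto.
    + exfalso. assert (v = - u) by lra. subst v.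
      assert (Hu : (Defs.dist A B + Defs.dist B C + Defs.dist C D + Defs.dist D A) * u = 0)
        by (rewrite <- HN, hL1, hL2, hL3, hL4; ring).
      assert (u = 0) by nra. subst u.
      rewrite hL1, hL2, hL3, hL4 in HS.
      destruct Ho as [[? [? [? ?]]]|[? [? [? ?]]]]; lra.
  - right. apply cyclic_of_det.
    + assert (Z := sc_id A B C D).
      assert (Z2 : dot A B A D * cross B C B A * cross C D C B * cross D A D C
       + cross A B A D * dot B C B A * cross C D C B * cross D A D C
       + cross A B A D * cross B C B A * dot C D C B * cross D A D C
       + cross A B A D * cross B C B A * cross C D C B * dot D A D C = 0).
      { transitivity ((dot A B A D / cross A B A D + dot B C B A / cross B C B A
          + dot C D C B / cross C D C B + dot D A D C / cross D A D C) *
          (cross A B A D * cross B C B A * cross C D C B * cross D A D C)).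
        - field. repeat split; assumption.
        - rewrite HSC. ring. }
      rewrite Z2 in Z. symmetry in Z.
      apply Rmult_integral in Z. destruct Z as [Z|Z]; [|contradiction].
      apply Rmult_integral in Z. destruct Z as [Z|Z]; [exact Z|contradiction].
    + replace (cross A B B C) with (cross B C B A) by (destruct A, B, C; unfold cross, px, py; simpl; ring).
      exact HXB.
Qed.
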